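(* Let $C\subseteq[n]$ be a nonempty proper subset and let $\ket{\psi}=\ket{a}_C\otimes\ket{b}_{\overline{C}}$ be an $n$-qubit state, where $\ket{a}_C$ and $\ket{b}_{\overline{C}}$ are each $\epsilon$-far from every multipartite product state. There is an algorithm (not necessarily time-efficient) which, given $m=O(n/\epsilon^2)$ copies of $\ket{\psi}$, identifies the cut $C$ (i.e. outputs $C$ or $\overline{C}$) with probability at least $99\%$.
   Context: A state on a set $Q$ of qubits is multipartite product if it equals $\ket{a'}_D\otimes\ket{b'}_{Q\setminus D}$ for some nonempty proper $D\subsetneq Q$; a pure state $\ket{\phi}$ is $\epsilon$-far from a set $\mathcal{P}$ if $|\langle\phi|\chi\rangle|^2\le1-\epsilon^2$ for all $\ket{\chi}\in\mathcal{P}$. $\overline{C}=[n]\setminus C$. *)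

(* Defs.v *)
From HB Require Import structures.
From mathcomp Require Import all_boot all_order all_algebra.
From mathcomp Require Import complex reals.
Set Implicit Arguments. Unset Strict Implicit. Unset Printing Implicit Defensive.
Import Order.TTheory GRing.Theory Num.Theory.
Local Open Scope ring_scope.
Local Open Scope complex_scope.

Section Quantum.
Variable R : realType.
Local Notation C := (complex R).

(* A (not necessarily normalised) vector in the Hilbert space of a finite set
   Q of qubits: a function from computational basis strings {0,1}^Q to C. *)
Definition qvec (Q : finType) := {ffun Q -> bool} -> C.

Definition sub (Q : finType) (D : {set Q}) : finType := {x : Q | x \in D}.

Definition restr (Q : finType) (D : {set Q}) (x : {ffun Q -> bool})
  : {ffun sub D -> bool} := [ffun i => x (val i)].

Definition inner (T : finType) (u v : T -> C) : C :=
  \sum_(x : T) (u x)^* * v x.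

Definition is_state (Q : finType) (phi : qvec Q) : Prop :=
  inner phi phi = 1.

Definition tensor (Q : finType) (D : {set Q}) (a : qvec (sub D))
  (b : qvec (sub (~: D))) : qvec Q :=
  fun x => a (restr D x) * b (restr (~: D) x).

Definition multipartite_product (Q : finType) (chi : qvec Q) : Prop :=
  is_state chi /\
  exists D : {set Q}, [/\ D != set0, D != setT &
    exists (a' : qvec (sub D)) (b' : qvec (sub (~: D))), chi = tensor a' b'].

Definition far_from_product (Q : finType) (eps : R) (phi : qvec Q) : Prop :=
  forall chi : qvec Q, multipartite_product chi ->
    `|inner phi chi| ^+ 2 <= 1 - (eps ^+ 2)%:C.

(* m copies: basis of ((C^2)^{(x)n})^{(x)m} indexed by m-tuples of strings *)
Definition copies_idx (n m : nat) : finType :=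
  {ffun 'I_m -> {ffun 'I_n -> bool}}.

Definition tensor_pow (n m : nat) (psi : qvec 'I_n) : copies_idx n m -> C :=
  fun X => \prod_(k < m) psi (X k).

Definition psd (T : finType) (E : T -> T -> C) : Prop :=
  forall v : T -> C, 0 <= \sum_(x : T) \sum_(y : T) (v x)^* * E x y * v y.

Definition povm (T O : finType) (E : O -> T -> T -> C) : Prop :=
  (forall o, psd (E o)) /\
  (forall x y, \sum_(o : O) E o x y = (x == y)%:R).

Definition outcome_prob (T O : finType) (E : O -> T -> T -> C) (o : O)
  (v : T -> C) : C :=
  \sum_(x : T) \sum_(y : T) (v x)^* * E o x y * v y.

End Quantum.

(* Main.v *)
Require Import Defs.
From HB Require Import structures.
From mathcomp Require Import all_boot all_order all_algebra.
From mathcomp Require Import complex reals.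
From mathcomp Require Import ring lra.
From Stdlib Require Import FunctionalExtensionality.
Import Order.TTheory GRing.Theory Num.Theory.
Set Implicit Arguments. Unset Strict Implicit. Unset Printing Implicit Defensive.
Local Open Scope complex_scope.
Local Open Scope ring_scope.

Section LinAlg.
Variable (R : realType) (T : finType).
Local Notation C := (complex R).

Definition op := T -> T -> C.
Definition kmul (A B : op) : op := fun x y => \sum_z A x z * B z y.
Definition kid : op := fun x y => (x == y)%:R.
Definition kzero : op := fun x y => 0.
Definition kadd (A B : op) : op := fun x y => A x y + B x y.
Definition ksub (A B : op) : op := fun x y => A x y - B x y.
Definition kadj (A : op) : op := fun x y => (A y x)^*.
Definition kapp (A : op) (v : T -> C) : T -> C := fun x => \sum_y A x y * v y.
Definition nsq (z : C) : R := complex.Re z ^+ 2 + complex.Im z ^+ 2.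
Definition nr (v : T -> C) : R := \sum_x nsq (v x).
Definition dotc (u v : T -> C) : C := \sum_x (u x)^* * v x.
Definition proj (P : op) := kadj P = P /\ kmul P P = P.

Lemma cjM (a b : C) : (a * b)^* = a^* * b^*.
Proof. exact: rmorphM. Qed.
Lemma cjD (a b : C) : (a + b)^* = a^* + b^*.
Proof. exact: rmorphD. Qed.
Lemma cjB (a b : C) : (a - b)^* = a^* - b^*.
Proof. exact: rmorphB. Qed.
Lemma cj_sum (I : finType) (F : I -> C) : (\sum_i F i)^* = \sum_i (F i)^*.
Proof. exact: rmorph_sum. Qed.
Lemma cj_prod (I : finType) (F : I -> C) : (\prod_i F i)^* = \prod_i (F i)^*.
Proof. exact: rmorph_prod. Qed.
Lemma cj_nat k : (k%:R : C)^* = k%:R.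
Proof. exact: rmorph_nat. Qed.
Lemma cjE (z : C) : z^* = conjc z.
Proof. by []. Qed.
Lemma cjK (z : C) : z^*^* = z.
Proof. exact: conjCK. Qed.

Lemma rcD (a b : R) : (a + b)%:C = a%:C + b%:C :> C.
Proof. exact: rmorphD. Qed.
Lemma rcB (a b : R) : (a - b)%:C = a%:C - b%:C :> C.
Proof. exact: rmorphB. Qed.
Lemma rcM (a b : R) : (a * b)%:C = a%:C * b%:C :> C.
Proof. exact: rmorphM. Qed.
Lemma rc_sum (I : finType) (F : I -> R) : (\sum_i F i)%:C = \sum_i (F i)%:C :> C.
Proof. exact: rmorph_sum. Qed.
Lemma rc_prod (I : finType) (F : I -> R) : (\prod_i F i)%:C = \prod_i (F i)%:C :> C.
Proof. exact: rmorph_prod. Qed.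
Lemma rcX (a : R) k : (a ^+ k)%:C = a%:C ^+ k :> C.
Proof. exact: rmorphXn. Qed.
Lemma rcV (a : R) : (a^-1)%:C = (a%:C)^-1 :> C.
Proof. exact: fmorphV. Qed.
Lemma rc_nat k : (k%:R : R)%:C = k%:R :> C.
Proof. exact: rmorph_nat. Qed.

Lemma kmulA A B D : kmul A (kmul B D) = kmul (kmul A B) D.
Proof.
apply: functional_extensionality => x; apply: functional_extensionality => y.
rewrite /kmul; under eq_bigr do rewrite mulr_sumr.
under [RHS]eq_bigr do rewrite mulr_suml.
rewrite exchange_big; apply: eq_bigr => w _; apply: eq_bigr => z _.
by rewrite mulrA.
Qed.

Lemma sum_delta (F : T -> C) x : \sum_z (x == z)%:R * F z = F x.
Proof.
rewrite (bigD1 x) //= eqxx mul1r big1 ?addr0 // => z /negbTE.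
by rewrite eq_sym => ->; rewrite mul0r.
Qed.

Lemma sum_delta' (F : T -> C) x : \sum_z F z * (z == x)%:R = F x.
Proof.
rewrite -[RHS](sum_delta F x); apply: eq_bigr => z _.
by rewrite mulrC eq_sym.
Qed.

Lemma kmul1l A : kmul kid A = A.
Proof.
apply: functional_extensionality => x; apply: functional_extensionality => y.
by rewrite /kmul /kid sum_delta.
Qed.

Lemma kmul1r A : kmul A kid = A.
Proof.
apply: functional_extensionality => x; apply: functional_extensionality => y.
by rewrite /kmul /kid sum_delta'.
Qed.

Lemma kmulDr A B D : kmul A (kadd B D) = kadd (kmul A B) (kmul A D).
Proof.
apply: functional_extensionality => x; apply: functional_extensionality => y.
by rewrite /kmul /kadd -big_split; apply: eq_bigr => z _; rewrite mulrDr.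
Qed.

Lemma kmulDl A B D : kmul (kadd B D) A = kadd (kmul B A) (kmul D A).
Proof.
apply: functional_extensionality => x; apply: functional_extensionality => y.
by rewrite /kmul /kadd -big_split; apply: eq_bigr => z _; rewrite mulrDl.
Qed.

Lemma kmulBr A B D : kmul A (ksub B D) = ksub (kmul A B) (kmul A D).
Proof.
apply: functional_extensionality => x; apply: functional_extensionality => y.
by rewrite /kmul /ksub -sumrB; apply: eq_bigr => z _; rewrite mulrBr.
Qed.

Lemma kmulBl A B D : kmul (ksub B D) A = ksub (kmul B A) (kmul D A).
Proof.
apply: functional_extensionality => x; apply: functional_extensionality => y.
by rewrite /kmul /ksub -sumrB; apply: eq_bigr => z _; rewrite mulrBl.
Qed.

Lemma kadj_mul A B : kadj (kmul A B) = kmul (kadj B) (kadj A).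
Proof.
apply: functional_extensionality => x; apply: functional_extensionality => y.
rewrite /kadj /kmul cj_sum; apply: eq_bigr => z _.
by rewrite cjM mulrC.
Qed.

Lemma kadj_sub A B : kadj (ksub A B) = ksub (kadj A) (kadj B).
Proof.
apply: functional_extensionality => x; apply: functional_extensionality => y.
by rewrite /kadj /ksub cjB.
Qed.

Lemma kadj_id : kadj kid = kid.
Proof.
apply: functional_extensionality => x; apply: functional_extensionality => y.
by rewrite /kadj /kid cj_nat eq_sym.
Qed.

Lemma proj_zero : proj kzero.
Proof.
split; apply: functional_extensionality => x; apply: functional_extensionality => y.
  by rewrite /kadj /kzero rmorph0.
by rewrite /kmul /kzero big1 // => z _; rewrite mul0r.
Qed.

Lemma proj_compl P : proj P -> proj (ksub kid P).
Proof.
move=> [h1 h2]; split; first by rewrite kadj_sub kadj_id h1.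
rewrite kmulBr kmulBl kmulBl kmul1l kmul1r kmul1l h2.
apply: functional_extensionality => x; apply: functional_extensionality => y.
rewrite /ksub; ring.
Qed.

Lemma kapp_mul A B v : kapp (kmul A B) v = kapp A (kapp B v).
Proof.
apply: functional_extensionality => x.
rewrite /kapp /kmul; under eq_bigr do rewrite mulr_suml.
under [RHS]eq_bigr do rewrite mulr_sumr.
rewrite exchange_big; apply: eq_bigr => w _; apply: eq_bigr => z _.
by rewrite mulrA.
Qed.

Lemma kapp_id v : kapp kid v = v.
Proof. by apply: functional_extensionality => x; rewrite /kapp sum_delta. Qed.

Lemma kapp_sub A B v : kapp (ksub A B) v = fun x => kapp A v x - kapp B v x.
Proof.
apply: functional_extensionality => x.
by rewrite /kapp /ksub -sumrB; apply: eq_bigr => z _; rewrite mulrBl.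
Qed.

Lemma kapp_vsub A u w : kapp A (fun y => u y - w y) = fun x => kapp A u x - kapp A w x.
Proof.
apply: functional_extensionality => x.
by rewrite /kapp -sumrB; apply: eq_bigr => z _; rewrite mulrBr.
Qed.

Lemma dot_adj u A w : dotc u (kapp A w) = dotc (kapp (kadj A) u) w.
Proof.
rewrite /dotc /kapp /kadj.
under eq_bigr do rewrite mulr_sumr.
under [RHS]eq_bigr do rewrite cj_sum mulr_suml.
rewrite exchange_big; apply: eq_bigr => y _; apply: eq_bigr => x _.
rewrite cjM cjK mulrA; congr (_ * _); exact: mulrC.
Qed.

Lemma nsqE (z : C) : z^* * z = (nsq z)%:C.
Proof. by rewrite cjE; case: z => a b; rewrite /nsq /=; apply/eqP; rewrite eq_complex /=; apply/andP; split; apply/eqP; ring. Qed.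

Lemma nsqE' (z : C) : z * z^* = (nsq z)%:C.
Proof. by rewrite mulrC nsqE. Qed.

Lemma nsq_conj (z : C) : nsq z^* = nsq z.
Proof. by rewrite cjE; case: z => a b; rewrite /nsq /= sqrrN. Qed.

Lemma nsqM (x y : C) : nsq (x * y) = nsq x * nsq y.
Proof. by case: x => a b; case: y => c d; rewrite /nsq /=; ring. Qed.

Lemma nsq_rc (r : R) : nsq r%:C = r ^+ 2.
Proof. by rewrite /nsq /= expr0n /= addr0. Qed.

Lemma nsq_eq0 (z : C) : nsq z = 0 -> z = 0.
Proof.
case: z => a b; rewrite /nsq /= => h.
have ha : a ^+ 2 = 0 by apply/eqP; rewrite eq_le sqr_ge0 andbT -h lerDl sqr_ge0.
have hb : b ^+ 2 = 0 by move: h; rewrite ha add0r.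
by move/eqP: ha; rewrite sqrf_eq0 => /eqP ->; move/eqP: hb; rewrite sqrf_eq0 => /eqP ->.
Qed.

Lemma nsq_ge0 z : 0 <= nsq z.
Proof. by rewrite /nsq addr_ge0 // sqr_ge0. Qed.

Lemma nr_ge0 v : 0 <= nr v.
Proof. by rewrite /nr sumr_ge0 // => x _; apply: nsq_ge0. Qed.

Lemma dotc_nr v : dotc v v = (nr v)%:C.
Proof. by rewrite /dotc /nr rc_sum; apply: eq_bigr => x _; rewrite nsqE. Qed.

Lemma dot_proj P v : proj P -> dotc v (kapp P v) = (nr (kapp P v))%:C.
Proof.
move=> [h1 h2]; rewrite -{1}h2 kapp_mul dot_adj h1; exact: dotc_nr.
Qed.

Lemma proj_pyth P v : proj P ->
  nr v = nr (kapp P v) + nr (fun x => v x - kapp P v x).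
Proof.
move=> hP; apply: (@complexI R); rewrite rcD.
have hQ := proj_compl hP.
have -> : (fun x => v x - kapp P v x) = kapp (ksub kid P) v by rewrite kapp_sub kapp_id.
rewrite -(dot_proj v hP) -(dot_proj v hQ) -dotc_nr /dotc -big_split /=; apply: eq_bigr => x _.
by rewrite -mulrDr kapp_sub kapp_id addrC subrK.
Qed.

Lemma nr_le_proj P v : proj P -> nr (kapp P v) <= nr v.
Proof. by move=> hP; rewrite (proj_pyth v hP) lerDl nr_ge0. Qed.

Lemma nr_le_compl P v : proj P -> nr (fun x => v x - kapp P v x) <= nr v.
Proof. by move=> hP; rewrite (proj_pyth v hP) lerDr nr_ge0. Qed.

Lemma nr_opp v : nr (fun x => - v x) = nr v.
Proof.
by apply: eq_bigr => x _; case: (v x) => a b; rewrite /nsq /= !sqrrN.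
Qed.

Lemma nsq_add_le (t : R) a b : 0 < t ->
  nsq (a + b) <= (1 + t) * nsq a + (1 + t^-1) * nsq b.
Proof.
move=> t0; case: a => a1 a2; case: b => b1 b2; rewrite /nsq /=.
have tn : t != 0 by rewrite gt_eqF.
set s := t^-1.
have s0 : 0 <= s by rewrite invr_ge0 ltW.
have e : (1 + t) * (a1 ^+ 2 + a2 ^+ 2) + (1 + s) * (b1 ^+ 2 + b2 ^+ 2)
   - ((a1 + b1) ^+ 2 + (a2 + b2) ^+ 2)
   = s * ((t * a1 - b1) ^+ 2 + (t * a2 - b2) ^+ 2).
  rewrite /s; field; exact: tn.
by rewrite -subr_ge0 e mulr_ge0 // addr_ge0 // sqr_ge0.
Qed.

Lemma nr_add_le (t : R) u w : 0 < t ->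
  nr (fun x => u x + w x) <= (1 + t) * nr u + (1 + t^-1) * nr w.
Proof.
move=> t0; rewrite /nr !mulr_sumr -big_split /=; apply: ler_sum => x _.
exact: nsq_add_le.
Qed.

End LinAlg.
Arguments kid {R T}. Arguments kzero {R T}.


Section Seq.
Variables (R : realType) (T : finType) (f : nat -> op R T).
Local Notation C := (complex R).

Fixpoint Bk k : op R T :=
  match k with 0 => kid | k'.+1 => kmul (ksub kid (f k')) (Bk k') end.
Definition Ak k := kmul (f k) (Bk k).

Lemma step_id (P B : op R T) : proj P ->
  kadd (kmul (kadj (kmul P B)) (kmul P B))
       (kmul (kadj (kmul (ksub kid P) B)) (kmul (ksub kid P) B)) = kmul (kadj B) B.
Proof.
move=> hP; have [h1 h2] := hP; have [h3 h4] := proj_compl hP.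
rewrite !kadj_mul h1 h3 -!kmulA [kmul P (kmul P B)]kmulA h2.
rewrite [kmul (ksub kid P) (kmul _ B)]kmulA h4 -kmulDr -kmulDl.
have -> : kadd P (ksub kid P) = kid.
  apply: functional_extensionality => x; apply: functional_extensionality => y.
  by rewrite /kadd /ksub addrC subrK.
by rewrite kmul1l.
Qed.

Hypothesis hf : forall j, proj (f j).

Lemma tele k x y :
  \sum_(j < k) kmul (kadj (Ak j)) (Ak j) x y + kmul (kadj (Bk k)) (Bk k) x y = kid x y.
Proof.
elim: k => [|k IH].
  by rewrite big_ord0 add0r /= kadj_id kmul1l.
rewrite big_ord_recr /= -addrA.
have := congr1 (fun F => F x y) (step_id (Bk k) (hf k)).
rewrite /kadd /= => ->; exact: IH.
Qed.

Variable Psi : T -> C.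
Hypothesis nPsi : nr Psi = 1.

Lemma err_bound (delta : R) k : 0 <= delta ->
  (forall j, (j < k)%N -> nr (kapp (f j) Psi) <= delta) ->
  forall j, (j <= k)%N -> nr (fun x => kapp (Bk j) Psi x - Psi x) <= (j.+1%:R) ^+ 2 * delta.
Proof.
move=> d0 hd; elim=> [|j IH] hj.
  rewrite /= kapp_id.
  have -> : nr (fun x => Psi x - Psi x) = 0.
    by rewrite /nr big1 // => x _; rewrite subrr /nsq /= expr0n /= addr0.
  by rewrite mulr_ge0 // sqr_ge0.
have hjk : (j < k)%N by [].
have {}IH := IH (ltnW hj).
set y := kapp (Bk j) Psi.
set d := fun x => y x - Psi x.
have E : (fun x => kapp (Bk j.+1) Psi x - Psi x)
    = fun x => (d x - kapp (f j) d x) + (- kapp (f j) Psi x).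
  rewrite /= kapp_mul kapp_sub kapp_id -/y /d kapp_vsub.
  apply: functional_extensionality => x; ring.
rewrite E.
have t0 : 0 < (j.+1%:R : R)^-1 by rewrite invr_gt0 ltr0n.
apply: le_trans (nr_add_le _ _ t0) _.
rewrite nr_opp invrK.
have h1 := nr_le_compl d (hf j).
have h2 := hd j hjk.
set a := nr _ in h1 *; set b := nr (kapp (f j) Psi) in h2 *.
have a0 : 0 <= a by apply: nr_ge0.
set J := (j.+1%:R : R).
have J0 : 0 < J by rewrite ltr0n.
have -> : (j.+2%:R : R) = J + 1 by rewrite /J -addn1 natrD.
apply: (@le_trans _ _ ((1 + J^-1) * (J ^+ 2 * delta) + (1 + J) * delta)).
  apply: lerD; last by rewrite ler_wpM2l // addr_ge0.
  by rewrite ler_wpM2l ?addr_ge0 ?invr_ge0 ?(ltW J0) //; exact: le_trans h1 IH.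
have -> : (1 + J^-1) * (J ^+ 2 * delta) + (1 + J) * delta = (J ^+ 2 + J + 1 + J) * delta.
  by field; rewrite paddr_eq0 ?ler01 ?ler0n // oner_eq0.
rewrite ler_wpM2r // le_eqVlt; apply/orP; left; apply/eqP; ring.
Qed.

Lemma success (delta t : R) k : 0 <= delta -> 0 < t ->
  (forall j, (j < k)%N -> nr (kapp (f j) Psi) <= delta) ->
  kapp (f k) Psi = Psi ->
  1 <= (1 + t) * nr (kapp (Ak k) Psi) + (1 + t^-1) * ((k.+1%:R) ^+ 2 * delta).
Proof.
move=> d0 t0 hd hk.
have e := err_bound d0 hd (leqnn k).
set y := kapp (Bk k) Psi in e.
set d := fun x => y x - Psi x in e.
have E : Psi = fun x => kapp (f k) y x + (- kapp (f k) d x).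
  apply: functional_extensionality => x.
  by rewrite /d kapp_vsub hk; ring.
suff H : nr Psi <= (1 + t) * nr (kapp (Ak k) Psi) + (1 + t^-1) * ((k.+1%:R) ^+ 2 * delta).
  by move: H; rewrite nPsi.
rewrite {1}E.
apply: le_trans (nr_add_le _ _ t0) _.
rewrite nr_opp /Ak kapp_mul -/y.
apply: lerD => //; rewrite ler_wpM2l ?addr_ge0 ?invr_ge0 ?(ltW t0) //.
by apply: le_trans e; apply: nr_le_proj.
Qed.

End Seq.


Definition mixg (Q : finType) (S : {set Q}) (u v : {ffun Q -> bool}) : {ffun Q -> bool} :=
  [ffun x => if x \in S then u x else v x].

Definition sv (R : realType) (Q : finType) (S : {set Q}) (a : {ffun Q -> bool} -> complex R) : complex R :=
  \sum_(p : {ffun Q -> bool} * {ffun Q -> bool})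
     (a p.1 * a p.2)^* * (a (mixg S p.2 p.1) * a (mixg S p.1 p.2)).

Lemma state_nsq (R : realType) (Q : finType) (b : {ffun Q -> bool} -> complex R) :
  is_state b -> \sum_u nsq (b u) = 1.
Proof.
move=> hst; apply: (@complexI R); rewrite rc_sum; transitivity (inner b b); last exact: hst.
by rewrite /inner; apply: eq_bigr => u _; rewrite nsqE.
Qed.

Section Split.
Variables (R : realType) (Q : finType) (D : {set Q}).
Local Notation C := (complex R).
Local Notation XQ := {ffun Q -> bool}.
Local Notation XD := {ffun sub D -> bool}.
Local Notation XD' := {ffun sub (~: D) -> bool}.

Definition join (i : XD) (k : XD') : XQ :=
  [ffun x => match (insub x : option (sub D)) with
             | Some y => i y
             | None => match (insub x : option (sub (~: D))) with
                       | Some z => k z | None => false end end].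

Lemma restr_join i k : restr D (join i k) = i.
Proof.
apply/ffunP => y; rewrite !ffunE.
case: insubP => [y' _ /val_inj -> //|].
by rewrite (valP y).
Qed.

Lemma restr_joinC i k : restr (~: D) (join i k) = k.
Proof.
apply/ffunP => y; rewrite !ffunE.
case: insubP => [y' hy _|_].
  by move: (valP y); rewrite in_setC hy.
case: insubP => [y' _ /val_inj -> //|].
by rewrite (valP y).
Qed.

Lemma join_restr u : join (restr D u) (restr (~: D) u) = u.
Proof.
apply/ffunP => x; rewrite !ffunE.
case: insubP => [y _ <-|hn]; first by rewrite ffunE.
case: insubP => [z _ <-|hn']; first by rewrite ffunE.
by move: hn'; rewrite in_setC hn.
Qed.

Lemma split_sum (F : XQ -> C) :
  \sum_(u : XQ) F u = \sum_(i : XD) \sum_(k : XD') F (join i k).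
Proof.
rewrite pair_big /=.
rewrite (reindex (fun p : XD * XD' => join p.1 p.2)) //=.
exists (fun u => (restr D u, restr (~: D) u)) => [[i k] _|u _] /=.
  by rewrite restr_join restr_joinC.
by rewrite join_restr.
Qed.

Lemma split_sumR (F : XQ -> R) :
  \sum_(u : XQ) F u = \sum_(i : XD) \sum_(k : XD') F (join i k).
Proof.
rewrite pair_big /=.
rewrite (reindex (fun p : XD * XD' => join p.1 p.2)) //=.
exists (fun u => (restr D u, restr (~: D) u)) => [[i k] _|u _] /=.
  by rewrite restr_join restr_joinC.
by rewrite join_restr.
Qed.

Lemma mix_join i1 k1 i2 k2 : mixg D (join i1 k1) (join i2 k2) = join i1 k2.
Proof.
apply/ffunP => x; rewrite !ffunE.
case: insubP => [y _ <-|hn]; first by rewrite (valP y).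
by rewrite (negbTE hn).
Qed.

Variable a : XQ -> C.
Definition Mc (i : XD) (k : XD') := a (join i k).
Definition Gc (i1 i2 : XD) := \sum_(k : XD') (Mc i1 k)^* * Mc i2 k.
Definition svr := \sum_(i1 : XD) \sum_(i2 : XD) nsq (Gc i1 i2).

Lemma sv_coord : sv D a = (svr)%:C.
Proof.
rewrite /sv -(pair_bigA _ (fun u1 u2 => (a u1 * a u2)^* * (a (mixg D u2 u1) * a (mixg D u1 u2)))) /= split_sum.
rewrite /svr rc_sum; apply: eq_bigr => i1 _.
rewrite rc_sum.
under eq_bigr => k _ do rewrite split_sum.
rewrite exchange_big /=; apply: eq_bigr => i2 _.
rewrite -nsqE' /Gc cj_sum mulr_suml; apply: eq_bigr => k1 _.
rewrite mulr_sumr; apply: eq_bigr => k2 _.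
rewrite !mix_join /Mc !cjM cjK; ring.
Qed.

Lemma svr_ge0 : 0 <= svr.
Proof. by rewrite /svr sumr_ge0 // => i _; rewrite sumr_ge0 // => j _; apply: nsq_ge0. Qed.

Lemma tensor_join (al : qvec R (sub D)) (be : qvec R (sub (~: D))) i k :
  tensor al be (join i k) = al i * be k.
Proof. by rewrite /tensor restr_join restr_joinC. Qed.

Lemma op_bound (eps : R) : 0 < eps -> eps <= 1 -> D != set0 -> D != setT ->
  far_from_product eps a ->
  forall v : XD' -> C,
  \sum_i nsq (\sum_k Mc i k * v k) <= (1 - eps ^+ 2) * \sum_k nsq (v k).
Proof.
move=> e0 e1 hD0 hDT hfar v.
set w := fun i => \sum_k Mc i k * v k.
rewrite -/(w _).
set Nw := \sum_i nsq (w i).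
set Nv := \sum_k nsq (v k).
have lam0 : 0 <= 1 - eps ^+ 2 by rewrite subr_ge0 exprn_ile1 // ltW.
have Nw0 : 0 <= Nw by rewrite sumr_ge0 // => i _; apply: nsq_ge0.
have Nv0 : 0 <= Nv by rewrite sumr_ge0 // => i _; apply: nsq_ge0.
case: (eqVneq Nw 0) => [->|NwN0]; first by rewrite mulr_ge0.
have Nwp : 0 < Nw by rewrite lt0r NwN0.
have Nvp : 0 < Nv.
  rewrite lt0r Nv0 andbT; apply/negP => /eqP hv.
  have vz : forall k, v k = 0.
    move=> k; apply: nsq_eq0.
    by apply: (psumr_eq0P (fun k _ => nsq_ge0 (v k)) hv).
  move/eqP: NwN0; apply; rewrite /Nw big1 // => i _.
  by rewrite /w big1 ?nsq_rc ?expr0n // => k _; rewrite vz mulr0.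
set sw := Num.sqrt Nw; set sv' := Num.sqrt Nv.
have swp : 0 < sw by rewrite sqrtr_gt0.
have svp : 0 < sv' by rewrite sqrtr_gt0.
have sw2 : sw ^+ 2 = Nw by rewrite sqr_sqrtr.
have sv2 : sv' ^+ 2 = Nv by rewrite sqr_sqrtr.
pose al : qvec R (sub D) := fun i => (sw^-1)%:C * w i.
pose be : qvec R (sub (~: D)) := fun k => (sv'^-1)%:C * (v k)^*.
pose chi := tensor al be.
have hin : inner a chi = (sw / sv')%:C.
  rewrite /inner split_sum.
  have -> : sw / sv' = sw^-1 * sv'^-1 * Nw.
    by rewrite -sw2; field; rewrite !gt_eqF.
  rewrite rcM /Nw rc_sum mulr_sumr; apply: eq_bigr => i _.
  rewrite -nsqE' /w cj_sum !mulr_sumr; apply: eq_bigr => k _.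
  rewrite /chi tensor_join /al /be /Mc /w cjM rcM; ring.
have hst : is_state chi.
  rewrite /is_state /inner split_sum.
  have h1 : sw^-1 ^+ 2 * Nw = 1 by rewrite -sw2 exprVn mulVf // sqrf_eq0 gt_eqF.
  have h2 : sv'^-1 ^+ 2 * Nv = 1 by rewrite -sv2 exprVn mulVf // sqrf_eq0 gt_eqF.
  have -> : \sum_i \sum_k (chi (join i k))^* * chi (join i k)
      = ((\sum_i nsq (al i)) * (\sum_k nsq (be k)))%:C.
    rewrite big_distrlr rc_sum; apply: eq_bigr => i _.
    rewrite rc_sum; apply: eq_bigr => k _.
    by rewrite /chi tensor_join nsqE nsqM.
  have -> : \sum_i nsq (al i) = 1.
    by rewrite -h1 /Nw mulr_sumr; apply: eq_bigr => i _; rewrite /al nsqM nsq_rc.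
  have -> : \sum_k nsq (be k) = 1.
    by rewrite -h2 /Nv mulr_sumr; apply: eq_bigr => i _; rewrite /be nsqM nsq_rc nsq_conj.
  by rewrite mulr1.
have hmp : multipartite_product chi.
  split => //; exists D; split => //; exists al, be; by [].
have := hfar chi hmp.
rewrite hin sqr_normc conjc_real -rcM.
have -> : (1 - (eps ^+ 2)%:C : C) = (1 - eps ^+ 2)%:C by rewrite rcB.
rewrite lecR -expr2 expr_div_n sw2 sv2 ler_pdivrMr //.
Qed.

Lemma sv_far (eps : R) : 0 < eps -> eps <= 1 -> D != set0 -> D != setT ->
  far_from_product eps a -> is_state a -> svr <= 1 - eps ^+ 2.
Proof.
move=> e0 e1 hD0 hDT hfar hst.
have tot : \sum_i \sum_k nsq (Mc i k) = 1.
  by have := state_nsq hst; rewrite (split_sumR (fun u => nsq (a u))).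
rewrite /svr (@le_trans _ _ ((1 - eps^+2) * \sum_i \sum_k nsq (Mc i k))) //;
  last by rewrite tot mulr1.
rewrite mulr_sumr; apply: ler_sum => i1 _.
have H := op_bound e0 e1 hD0 hDT hfar (fun k => (Mc i1 k)^*).
have E2 : \sum_k nsq ((Mc i1 k)^*) = \sum_k nsq (Mc i1 k).
  by apply: eq_bigr => k _; rewrite nsq_conj.
rewrite E2 in H; apply: le_trans H; rewrite le_eqVlt; apply/orP; left; apply/eqP.
apply: eq_bigr => i2 _; rewrite /Gc; congr nsq; apply: eq_bigr => k _; exact: mulrC.
Qed.

End Split.



Lemma sv_triv (R : realType) (Q : finType) (S : {set Q}) (a : {ffun Q -> bool} -> complex R) :
  is_state a -> (S == set0) || (S == setT) -> sv S a = 1.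
Proof.
move=> hst hS.
have E : forall p : {ffun Q -> bool} * {ffun Q -> bool},
    (a p.1 * a p.2)^* * (a (mixg S p.2 p.1) * a (mixg S p.1 p.2))
    = (nsq (a p.1) * nsq (a p.2))%:C.
  move=> [u1 u2] /=; rewrite -nsqM -nsqE.
  case/orP: hS => /eqP ->.
    have M0 : forall u v : {ffun Q -> bool}, mixg set0 u v = v by move=> u v; apply/ffunP => x; rewrite ffunE in_set0.
    by rewrite !M0.
  have M0 : forall u v : {ffun Q -> bool}, mixg setT u v = u by move=> u v; apply/ffunP => x; rewrite ffunE in_setT.
  by rewrite !M0 [a u2 * _]mulrC.
rewrite /sv (eq_bigr _ (fun p _ => E p)) -rc_sum.
rewrite -(pair_bigA _ (fun u1 u2 => nsq (a u1) * nsq (a u2))) /= -big_distrlr.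
by rewrite /= state_nsq // mulr1.
Qed.


Lemma sv_factor_bound (R : realType) (Q : finType) (S : {set Q}) (a : {ffun Q -> bool} -> complex R)
  (eps : R) : 0 < eps -> eps <= 1 -> is_state a -> far_from_product eps a ->
  exists r : R, [/\ sv S a = r%:C, 0 <= r, r <= 1 &
     ((S != set0) && (S != setT) -> r <= 1 - eps ^+ 2)].
Proof.
move=> e0 e1 hst hfar.
have lam : 1 - eps ^+ 2 <= 1 by rewrite lerBlDr lerDl sqr_ge0.
case hS: ((S == set0) || (S == setT)).
  exists 1; split => //; first by rewrite sv_triv.
  by move: hS; case: (S == set0); case: (S == setT).
have [hS0 hST] : S != set0 /\ S != setT by move: hS; case: (S == set0); case: (S == setT).
exists (svr S a); split.
- exact: sv_coord.
- exact: svr_ge0.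
- by apply: le_trans lam; apply: sv_far.
- by move=> _; apply: sv_far.
Qed.

Section Tens.
Variables (R : realType) (n : nat) (Cut : {set 'I_n}).
Variables (a : qvec R (sub Cut)) (b : qvec R (sub (~: Cut))).
Local Notation X := {ffun 'I_n -> bool}.
Local Notation psi := (tensor a b).

Definition S1 (S : {set 'I_n}) : {set sub Cut} := [set y : sub Cut | val y \in S].
Definition S2 (S : {set 'I_n}) : {set sub (~: Cut)} := [set y : sub (~: Cut) | val y \in S].

Lemma restr_mix1 S (u v : X) : restr Cut (mixg S u v) = mixg (S1 S) (restr Cut u) (restr Cut v).
Proof. by apply/ffunP => y; rewrite !ffunE inE. Qed.

Lemma restr_mix2 S (u v : X) : restr (~: Cut) (mixg S u v) = mixg (S2 S) (restr (~: Cut) u) (restr (~: Cut) v).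
Proof. by apply/ffunP => y; rewrite !ffunE inE. Qed.

Lemma sv_tensor S : sv S psi = sv (S1 S) a * sv (S2 S) b.
Proof.
rewrite /sv.
rewrite -(pair_bigA _ (fun u1 u2 => (psi u1 * psi u2)^* * (psi (mixg S u2 u1) * psi (mixg S u1 u2)))) /=.
rewrite -(pair_bigA _ (fun u1 u2 => (a u1 * a u2)^* * (a (mixg (S1 S) u2 u1) * a (mixg (S1 S) u1 u2)))) /=.
rewrite -(pair_bigA _ (fun u1 u2 => (b u1 * b u2)^* * (b (mixg (S2 S) u2 u1) * b (mixg (S2 S) u1 u2)))) /=.
rewrite (split_sum Cut) big_distrl; apply: eq_bigr => i1 _ /=.
under eq_bigr => k1 _ do rewrite (split_sum Cut).
rewrite exchange_big big_distrl; apply: eq_bigr => i2 _ /=.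
rewrite mulr_sumr; apply: eq_bigr => k1 _.
rewrite mulr_sumr; apply: eq_bigr => k2 _.
rewrite /tensor !restr_mix1 !restr_mix2 !restr_join !restr_joinC !cjM; ring.
Qed.

Lemma psi_nsq : is_state a -> is_state b -> \sum_u nsq (psi u) = 1.
Proof.
move=> ha hb; rewrite (split_sumR Cut).
under eq_bigr do under eq_bigr do rewrite /tensor restr_join restr_joinC nsqM.
by rewrite -big_distrlr /= !state_nsq // mulr1.
Qed.

Lemma psi_state : is_state a -> is_state b -> is_state psi.
Proof.
move=> ha hb; rewrite /is_state /inner.
under eq_bigr do rewrite nsqE.
by rewrite -rc_sum psi_nsq.
Qed.

Lemma psi_swap S (u1 u2 : X) : (S == Cut) || (S == ~: Cut) ->
  psi (mixg S u2 u1) * psi (mixg S u1 u2) = psi u1 * psi u2.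
Proof.
case/orP => /eqP ->.
  have h1 : forall u v : X, restr Cut (mixg Cut u v) = restr Cut u.
    by move=> u v; apply/ffunP => y; rewrite !ffunE (valP y).
  have h2 : forall u v : X, restr (~: Cut) (mixg Cut u v) = restr (~: Cut) v.
    by move=> u v; apply/ffunP => y; have := valP y; rewrite !ffunE in_setC => /negbTE ->.
  rewrite /tensor !h1 !h2; ring.
have h1 : forall u v : X, restr Cut (mixg (~: Cut) u v) = restr Cut v.
  by move=> u v; apply/ffunP => y; rewrite !ffunE in_setC (valP y).
have h2 : forall u v : X, restr (~: Cut) (mixg (~: Cut) u v) = restr (~: Cut) u.
  by move=> u v; apply/ffunP => y; rewrite !ffunE (valP y).
rewrite /tensor !h1 !h2; ring.
Qed.

Lemma cut_cases S : S != set0 -> S != setT -> S != Cut -> S != ~: Cut ->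
  ((S1 S != set0) && (S1 S != setT)) || ((S2 S != set0) && (S2 S != setT)).
Proof.
move=> h0 hT hC hC'.
apply/negPn/negP => /norP [/nandP h1 /nandP h2].
have E1 : exists c1, forall x, x \in Cut -> (x \in S) = c1.
  case: h1 => /negPn /eqP e.
    exists false => x hx.
    by have := in_set0 (Sub x hx : sub Cut); rewrite -e inE.
  exists true => x hx.
  by have := in_setT (Sub x hx : sub Cut); rewrite -e inE.
have E2 : exists c2, forall x, x \in ~: Cut -> (x \in S) = c2.
  case: h2 => /negPn /eqP e.
    exists false => x hx.
    by have := in_set0 (Sub x hx : sub (~: Cut)); rewrite -e inE.
  exists true => x hx.
  by have := in_setT (Sub x hx : sub (~: Cut)); rewrite -e inE.
case: E1 => c1 e1; case: E2 => c2 e2.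
have key : forall x, (x \in S) = if x \in Cut then c1 else c2.
  move=> x; case: ifP => hx; first exact: e1.
  by apply: e2; rewrite in_setC hx.
clear e1 e2; move: h0 hT hC hC'; case: c1 key; case: c2 => key.
- by rewrite (_ : S = setT) ?eqxx // ; apply/setP => x; rewrite key inE; case: ifP.
- by rewrite (_ : S = Cut) ?eqxx // ; apply/setP => x; rewrite key; case: ifP.
- by rewrite (_ : S = ~: Cut) ?eqxx // ; apply/setP => x; rewrite key in_setC; case: ifP.
- by rewrite (_ : S = set0) ?eqxx // ; apply/setP => x; rewrite key inE; case: ifP.
Qed.

End Tens.


Section Copies.
Variables (R : realType) (n q : nat).
Local Notation C := (complex R).
Local Notation X := {ffun 'I_n -> bool}.
Local Notation T := (copies_idx n (q + q)).

Definition pr (Y : T) (j : 'I_q) : X * X := (Y (lshift q j), Y (rshift q j)).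
Definition toW (Y : T) : {ffun 'I_q -> X * X} := [ffun j => pr Y j].
Definition fromW (F : {ffun 'I_q -> X * X}) : T :=
  [ffun k => match split k with inl j => (F j).1 | inr j => (F j).2 end].

Lemma toWK : cancel toW fromW.
Proof.
move=> Y; apply/ffunP => k; rewrite !ffunE.
case: splitP => j hj; rewrite ffunE /pr /=; congr (Y _); apply: val_inj => //=.
Qed.

Lemma fromWK : cancel fromW toW.
Proof.
move=> F; apply/ffunP => j; rewrite !ffunE /pr !ffunE.
have -> : split (lshift q j) = inl j := unsplitK (inl _ j).
have -> : split (rshift q j) = inr j := unsplitK (inr _ j).
by case: (F j).
Qed.

Lemma sum_copies (g : 'I_q -> X * X -> C) :
  \sum_(Y : T) \prod_j g j (pr Y j) = \prod_j \sum_(p : X * X) g j (p).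
Proof.
rewrite bigA_distr_bigA /=.
rewrite (reindex toW) /=; last by exists fromW => ? _; [apply: toWK | apply: fromWK].
by apply: eq_bigr => Y _; apply: eq_bigr => j _; rewrite ffunE.
Qed.

Variable psi : X -> C.
Definition phi (p : X * X) : C := psi p.1 * psi p.2.
Definition Psi : T -> C := tensor_pow (m := q + q) psi.

Lemma PsiE Y : Psi Y = \prod_j phi (pr Y j).
Proof. by rewrite /Psi /tensor_pow big_split_ord /= -big_split. Qed.

Variable S : {set 'I_n}.
Definition sw (p : X * X) : X * X := (mixg S p.2 p.1, mixg S p.1 p.2).

Lemma swK : involutive sw.
Proof.
move=> [u v]; rewrite /sw /=; congr pair; apply/ffunP => x; rewrite !ffunE;
  by case: (x \in S).
Qed.

Lemma eq_sw p p' : (p == sw p') = (sw p == p').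
Proof. by rewrite -{2}(swK p') (inj_eq (can_inj swK)). Qed.

Definition pir (p p' : X * X) : R := ((p == p')%:R + (sw p == p')%:R) / 2.
Definition swapP : op R T := fun Y Z => \prod_j (pir (pr Y j) (pr Z j))%:C.

Lemma sum_deltaR (c : X * X) (F : X * X -> R) : \sum_w (c == w)%:R * F w = F c.
Proof.
rewrite (bigD1 c) //= eqxx mul1r big1 ?addr0 // => z /negbTE.
by rewrite eq_sym => ->; rewrite mul0r.
Qed.

Lemma sum_deltaC (c : X * X) (F : X * X -> C) : \sum_w (c == w)%:R * F w = F c.
Proof.
rewrite (bigD1 c) //= eqxx mul1r big1 ?addr0 // => z /negbTE.
by rewrite eq_sym => ->; rewrite mul0r.
Qed.

Lemma pir_sym p p' : pir p p' = pir p' p.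
Proof.
have e1 : (p == p') = (p' == p) := eq_sym _ _.
have e2 : (sw p == p') = (sw p' == p) by rewrite -eq_sw eq_sym.
by rewrite /pir e1 e2.
Qed.

Lemma pir_sum (F : X * X -> C) p :
  \sum_w (pir p w)%:C * F w = (F p + F (sw p)) / 2.
Proof.
rewrite /pir.
have -> : \sum_w ((((p == w)%:R + (sw p == w)%:R) / 2 : R))%:C * F w
   = (\sum_w (p == w)%:R * F w + \sum_w (sw p == w)%:R * F w) / 2.
  rewrite -big_split mulr_suml; apply: eq_bigr => w _ /=.
  rewrite rcM rcD !rc_nat; have -> : ((2 : R)^-1)%:C = (2 : C)^-1.
    by rewrite rcV rc_nat.
  by ring.
by rewrite !sum_deltaC.
Qed.

Lemma pir_swl p p' : pir (sw p) p' = pir p p'.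
Proof. by rewrite /pir swK addrC. Qed.

Lemma pir_idem p p' : \sum_w pir p w * pir w p' = pir p p'.
Proof.
apply: (@complexI R); rewrite rc_sum.
under eq_bigr do rewrite rcM.
rewrite (pir_sum (fun w => (pir w p')%:C)) pir_swl; by field.
Qed.

Lemma swapP_proj : proj swapP.
Proof.
split.
  apply: functional_extensionality => Y; apply: functional_extensionality => Z.
  rewrite /kadj /swapP cj_prod; apply: eq_bigr => j _.
  by rewrite cjE conjc_real pir_sym.
apply: functional_extensionality => Y; apply: functional_extensionality => Z.
rewrite /kmul /swapP.
rewrite (eq_bigr (fun W => \prod_j ((pir (pr Y j) (pr W j))%:C * (pir (pr W j) (pr Z j))%:C))); last first.
  by move=> W _; rewrite big_split.
rewrite (sum_copies (fun j w => (pir (pr Y j) w)%:C * (pir w (pr Z j))%:C)).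
apply: eq_bigr => j _; rewrite -(pir_idem (pr Y j) (pr Z j)) rc_sum.
by apply: eq_bigr => w _; rewrite rcM.
Qed.


Lemma swap_app Y : kapp swapP Psi Y = \prod_j ((phi (pr Y j) + phi (sw (pr Y j))) / 2).
Proof.
rewrite /kapp /swapP.
rewrite (eq_bigr (fun W => \prod_j ((pir (pr Y j) (pr W j))%:C * phi (pr W j)))); last first.
  by move=> W _; rewrite PsiE; symmetry; apply: big_split.
rewrite (sum_copies (fun j w => (pir (pr Y j) w)%:C * phi w)).
by apply: eq_bigr => j _; rewrite pir_sum.
Qed.

Lemma swap_fix : (forall p, phi (sw p) = phi p) -> kapp swapP Psi = Psi.
Proof.
move=> h; apply: functional_extensionality => Y.
rewrite swap_app PsiE; apply: eq_bigr => j _; rewrite h.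
by field.
Qed.

Lemma phi_nsq : \sum_x nsq (psi x) = 1 -> \sum_p (phi p)^* * phi p = 1.
Proof.
move=> h.
rewrite (eq_bigr (fun p => (nsq (psi p.1) * nsq (psi p.2))%:C)); last first.
  by move=> p _; rewrite nsqE /phi nsqM.
rewrite -rc_sum -(pair_bigA _ (fun u1 u2 => nsq (psi u1) * nsq (psi u2))) /=.
by rewrite -big_distrlr /= h mulr1.
Qed.

Lemma Psi_nr : \sum_x nsq (psi x) = 1 -> nr Psi = 1.
Proof.
move=> h; apply: (@complexI R); rewrite -dotc_nr /dotc.
rewrite (eq_bigr (fun Y => \prod_j ((phi (pr Y j))^* * phi (pr Y j)))); last first.
  by move=> Y _; rewrite PsiE cj_prod -big_split.
rewrite (sum_copies (fun j w => (phi w)^* * phi w)) phi_nsq //.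
by rewrite prodr_const expr1n.
Qed.

Lemma swap_exp : \sum_x nsq (psi x) = 1 ->
  (nr (kapp swapP Psi))%:C = ((1 + sv S psi) / 2) ^+ q.
Proof.
move=> h; rewrite -dot_proj; last exact: swapP_proj.
rewrite /dotc.
rewrite (eq_bigr (fun Y => \prod_j ((phi (pr Y j))^* * ((phi (pr Y j) + phi (sw (pr Y j))) / 2)))); last first.
  by move=> Y _; rewrite swap_app PsiE cj_prod -big_split.
rewrite (sum_copies (fun j w => (phi w)^* * ((phi w + phi (sw w)) / 2))).
rewrite prodr_const card_ord; congr (_ ^+ _).
rewrite -(phi_nsq h) /sv -big_split mulr_suml; apply: eq_bigr => p _ /=.
by rewrite /phi /sw /=; ring.
Qed.

End Copies.


Lemma kadjK (R : realType) (T : finType) (A : op R T) : kadj (kadj A) = A.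
Proof.
apply: functional_extensionality => x; apply: functional_extensionality => y.
by rewrite /kadj cjK.
Qed.

Lemma form_dot (R : realType) (T : finType) (M : op R T) (v : T -> complex R) :
  \sum_x \sum_y (v x)^* * M x y * v y = dotc v (kapp M v).
Proof.
rewrite /dotc /kapp; apply: eq_bigr => x _; rewrite mulr_sumr.
by apply: eq_bigr => y _; rewrite mulrA.
Qed.

Lemma dot_gram (R : realType) (T : finType) (A : op R T) (v : T -> complex R) :
  dotc v (kapp (kmul (kadj A) A) v) = (nr (kapp A v))%:C.
Proof. by rewrite kapp_mul dot_adj kadjK dotc_nr. Qed.

Section Main.
Variables (R : realType) (n q : nat).
Local Notation C := (complex R).
Local Notation T := (copies_idx n (q + q)).

Definition Pof (S : {set 'I_n}) : op R T :=
  if (S != set0) && (S != setT) then @swapP R n q S else kzero.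
Definition fseq (j : nat) : op R T := Pof (nth set0 (enum {set 'I_n}) j).
Definition NN := #|{set 'I_n}|.
Definition EE (o : {set 'I_n}) : op R T := fun x y =>
  kmul (kadj (Ak fseq (enum_rank o))) (Ak fseq (enum_rank o)) x y
  + (o == set0)%:R * kmul (kadj (Bk fseq NN)) (Bk fseq NN) x y.

Lemma fseq_proj j : proj (fseq j).
Proof. rewrite /fseq /Pof; case: ifP => _; [exact: swapP_proj | exact: proj_zero]. Qed.

Lemma EE_prob o v : outcome_prob EE o v =
  (nr (kapp (Ak fseq (enum_rank o)) v) + (o == set0)%:R * nr (kapp (Bk fseq NN) v))%:C.
Proof.
rewrite /outcome_prob rcD rcM rc_nat -!dot_gram -!form_dot /EE.
rewrite mulr_sumr -big_split; apply: eq_bigr => x _ /=.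
rewrite mulr_sumr -big_split; apply: eq_bigr => y _ /=.
ring.
Qed.

Lemma EE_povm : povm EE.
Proof.
split.
  move=> o v; have := EE_prob o v; rewrite /outcome_prob => ->.
  by rewrite ler0c addr_ge0 ?mulr_ge0 ?nr_ge0 ?ler0n.
move=> x y.
rewrite big_split /=.
have -> : \sum_(o : {set 'I_n}) (o == set0)%:R * kmul (kadj (Bk fseq NN)) (Bk fseq NN) x y
    = kmul (kadj (Bk fseq NN)) (Bk fseq NN) x y.
  rewrite (bigD1 set0) //= eqxx mul1r big1 ?addr0 // => o /negbTE ->.
  by rewrite mul0r.
rewrite (reindex (@enum_val _ (mem predT))) /=; last first.
  by exists enum_rank => [i _|o _]; [rewrite enum_valK | rewrite enum_rankK].
under eq_bigr do rewrite enum_valK.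
exact: (tele fseq_proj NN x y).
Qed.

End Main.


Lemma card_sets n : #|{set 'I_n}| = (2 ^ n)%N.
Proof.
rewrite -cardsT.
have -> : [set: {set 'I_n}] = powerset [set: 'I_n].
  by apply/setP => A; rewrite inE powersetE subsetT.
by rewrite card_powerset cardsT card_ord.
Qed.

Lemma nth_rank n (S : {set 'I_n}) j : (j < #|{set 'I_n}|)%N ->
  nth set0 (enum {set 'I_n}) j = S -> (enum_rank S : nat) = j.
Proof.
move=> hj hS.
have : enum_val (Ordinal hj) = S by rewrite (enum_val_nth set0).
by move=> <-; rewrite enum_valK.
Qed.

Section Succ.
Variables (R : realType) (n q : nat) (Cut : {set 'I_n}).
Variables (a : qvec R (sub Cut)) (b : qvec R (sub (~: Cut))) (eps : R).
Hypotheses (e0 : 0 < eps) (e1 : eps <= 1) (hC0 : Cut != set0) (hCT : Cut != setT).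
Hypotheses (ha : is_state a) (hb : is_state b).
Hypotheses (fa : far_from_product eps a) (fb : far_from_product eps b).
Let delta : R := (1 - eps ^+ 2 / 2) ^+ q.
Hypothesis hq : 200 * (((2 ^ n)%N%:R) ^+ 2 * delta) <= 1 / 1000.
Local Notation psi := (tensor a b).
Local Notation Psi' := (tensor_pow (m := q + q) psi).

Lemma Psi_n1 : nr Psi' = 1.
Proof. exact: (@Psi_nr R n q psi (psi_nsq ha hb)). Qed.

Lemma delta_ge0 : 0 <= delta.
Proof.
have he : eps ^+ 2 <= 1 by rewrite exprn_ile1 // ltW.
rewrite /delta exprn_ge0 //; lra.
Qed.

Lemma swap_bound S : S != set0 -> S != setT -> S != Cut -> S != ~: Cut ->
  nr (kapp (@swapP R n q S) Psi') <= delta.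
Proof.
move=> h0 hT hC hC'.
have [r1 [E1 r10 r11 r1l]] := sv_factor_bound (S1 Cut S) e0 e1 ha fa.
have [r2 [E2 r20 r21 r2l]] := sv_factor_bound (S2 Cut S) e0 e1 hb fb.
have hr : r1 * r2 <= 1 - eps ^+ 2.
  case/orP: (cut_cases h0 hT hC hC') => hh.
    by apply: le_trans (r1l hh); rewrite ler_piMr.
  by apply: le_trans (r2l hh); rewrite ler_piMl.
have := @swap_exp R n q psi S (psi_nsq ha hb).
rewrite sv_tensor E1 E2 -rcM.
have -> : ((1 + (r1 * r2)%:C) / 2 : complex R) = ((1 + r1 * r2) / 2)%:C.
  by rewrite [RHS]rcM rcD rcV rc_nat.
rewrite -rcX => /complexI ->.
have he : eps ^+ 2 <= 1 by rewrite exprn_ile1 // ltW.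
have h12 := mulr_ge0 r10 r20.
rewrite /delta; apply: lerXn2r; rewrite ?nnegrE; lra.
Qed.

Lemma nr_kzero : nr (kapp (@kzero R (copies_idx n (q + q))) Psi') = 0.
Proof.
rewrite /nr big1 // => x _; rewrite /kapp /kzero big1 ?nsq_rc ?expr0n // => y _.
by rewrite mul0r.
Qed.

Lemma main_succ : (99%:R / 100%:R : complex R) <=
  outcome_prob (@EE R n q) Cut Psi' + outcome_prob (@EE R n q) (~: Cut) Psi'.
Proof.
set Sst := if (enum_rank Cut <= enum_rank (~: Cut))%N then Cut else ~: Cut.
have hSst : (Sst == Cut) || (Sst == ~: Cut).
  by rewrite /Sst; case: ifP => _; rewrite eqxx ?orbT.
have hmin : forall S, (S == Cut) || (S == ~: Cut) -> (enum_rank Sst <= enum_rank S)%N.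
  move=> S /orP [] /eqP ->; rewrite /Sst; case: ifP => // /negbT; rewrite -ltnNge => /ltnW //.
have hCC : Cut != ~: Cut.
  apply/eqP => e; case/set0Pn: hC0 => x hx.
  by have := hx; rewrite {1}e in_setC hx.
have hC'0 : ~: Cut != set0.
  by apply: contra hCT => /eqP e; rewrite -(setCK Cut) e setC0.
have hC'T : ~: Cut != setT.
  by apply: contra hC0 => /eqP e; rewrite -(setCK Cut) e setCT.
have [nS0 nST] : Sst != set0 /\ Sst != setT.
  by case/orP: hSst => /eqP ->.
set k0 := (enum_rank Sst : nat).
have k0N : (k0 < NN n)%N by rewrite /k0 /NN ltn_ord.
have hd : forall j, (j < k0)%N -> nr (kapp (@fseq R n q j) Psi') <= delta.
  move=> j hj; have hjN : (j < NN n)%N by apply: ltn_trans k0N.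
  rewrite /fseq /Pof.
  case: ifP => [/andP [h0 hT] | _]; last by rewrite nr_kzero delta_ge0.
  have nC : forall S, (S == Cut) || (S == ~: Cut) -> nth set0 (enum {set 'I_n}) j != S.
    move=> S hS; apply/eqP => e.
    have := nth_rank hjN e; have := hmin S hS; rewrite -/k0 => h1 h2.
    by move: hj; rewrite ltnNge -h2 h1.
  apply: swap_bound h0 hT _ _; apply: nC; by rewrite eqxx ?orbT.
have hk : kapp (@fseq R n q k0) Psi' = Psi'.
  rewrite /fseq /k0 (nth_enum_rank set0) /Pof nS0 nST /=.
  apply: swap_fix => p; rewrite /phi /sw /=; exact: psi_swap.
have t0 : (0 : R) < 199^-1 by rewrite invr_gt0.
have := success (@fseq_proj R n q) Psi_n1 delta_ge0 t0 hd hk.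
rewrite invrK => H.
have kb : (k0.+1%:R : R) ^+ 2 * delta <= ((2 ^ n)%N%:R) ^+ 2 * delta.
  rewrite ler_wpM2r ?delta_ge0 // lerXn2r ?nnegrE ?ler0n // ler_nat.
  by move: k0N; rewrite /NN card_sets.
set pr := nr _ in H.
have prS : forall o : {set 'I_n}, o = Sst -> pr <= nr (kapp (Ak (@fseq R n q) (enum_rank o)) Psi')
   + (o == set0)%:R * nr (kapp (Bk (@fseq R n q) (NN n)) Psi').
  move=> o ->; rewrite (negbTE nS0) mul0r addr0 //.
have g0 : forall o : {set 'I_n}, 0 <= nr (kapp (Ak (@fseq R n q) (enum_rank o)) Psi')
   + (o == set0)%:R * nr (kapp (Bk (@fseq R n q) (NN n)) Psi').
  by move=> o; rewrite addr_ge0 ?mulr_ge0 ?nr_ge0 ?ler0n.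
rewrite !EE_prob -rcD.
have -> : (99%:R / 100%:R : complex R) = (99%:R / 100%:R : R)%:C.
  by rewrite rcM rcV !rc_nat.
rewrite lecR.
have g1 := g0 Cut; have g2 := g0 (~: Cut).
have hq' := hq.
set Z := _ * delta in kb H; set W := _ * delta in kb hq'.
case/orP: hSst => /eqP e.
  have p1 := prS Cut (esym e); lra.
have p2 := prS (~: Cut) (esym e); lra.
Qed.

End Succ.


Section Num.
Variable R : realType.

Lemma bern (x : R) r : 0 <= x -> x <= 1 -> (1 - x) ^+ r * (1 + r%:R * x) <= 1.
Proof.
move=> x0 x1; elim: r => [|r IH]; first by rewrite expr0 mul0r addr0 mulr1.
have y0 : 0 <= (1 - x) ^+ r by rewrite exprn_ge0 // subr_ge0.
apply: le_trans IH.
rewrite exprSr -mulrA ler_wpM2l //.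
have -> : (r.+1%:R : R) = r%:R + 1 by rewrite -natr1.
have hh := mulr_ge0 (ler0n R r.+1) (mulr_ge0 x0 x0).
rewrite -natr1 in hh; nra.
Qed.

Lemma pow_small (x : R) r : 0 <= x -> x <= 1 -> 7 <= r%:R * x -> (1 - x) ^+ r <= 8^-1.
Proof.
move=> x0 x1 h.
have y0 : 0 <= (1 - x) ^+ r by rewrite exprn_ge0 // subr_ge0.
have := bern r x0 x1.
set y := (1 - x) ^+ r in y0 *; set z := r%:R * x in h *.
move=> hb.
have hy : y * 8 <= 1 by apply: le_trans hb; rewrite ler_wpM2l //; lra.
lra.
Qed.

End Num.

Local Close Scope complex_scope.
Local Open Scope ring_scope.
Theorem theorem2p21 (R : realType) :
  exists K : R, 0 < K /\
  forall (n : nat) (eps : R), 0 < eps -> eps <= 1 ->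
  exists (m : nat), m%:R <= K * n%:R / eps ^+ 2 /\
  exists E : {set 'I_n} -> copies_idx n m -> copies_idx n m -> complex R,
    povm E /\
    forall (Cut : {set 'I_n}), Cut != set0 -> Cut != setT ->
    forall (a : qvec R (sub Cut)) (b : qvec R (sub (~: Cut))),
      is_state a -> is_state b ->
      far_from_product eps a -> far_from_product eps b ->
      (99%:R / 100%:R : complex R) <=
        outcome_prob E Cut (tensor_pow (m:=m) (tensor a b))
        + outcome_prob E (~: Cut) (tensor_pow (m:=m) (tensor a b)).
Proof.
exists 210; split => // n eps e0 e1.
set e2 := eps ^+ 2.
have e20 : 0 < e2 by rewrite exprn_gt0.
have e21 : e2 <= 1 by rewrite exprn_ile1 // ltW.
set r := (Num.truncn (14 / e2)).+1.
have rlo : 14 / e2 < r%:R by apply: truncnS_gt.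
have rhi : r%:R <= 14 / e2 + 1.
  by rewrite /r -natr1 lerD2r truncn_le divr_ge0 // ltW.
set q := if n == 0%N then 0%N else (r * (n + 6))%N.
exists (q + q)%N; split.
  rewrite /q; case: eqP => [->|/eqP nn0]; first by rewrite addn0 mulr0 mul0r.
  have n1 : (1 <= n)%N by rewrite lt0n.
  have y1 : 1 <= e2^-1 by rewrite invr_ge1 // unitfE gt_eqF.
  have hr : r%:R <= 15 * e2^-1 by apply: le_trans rhi _; rewrite mulrC; lra.
  have hn : ((n + 6)%N%:R : R) <= 7 * n%:R.
    have h1 : (1 : R) <= n%:R by rewrite ler1n.
    rewrite natrD; lra.
  have := ler_pM (ler0n R r) (ler0n R (n + 6)) hr hn.
  move=> h; rewrite natrD natrM; lra.
exists (@EE R n q); split; first exact: EE_povm.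
move=> Cut hC0 hCT a b ha hb fa fb.
have n0 : n != 0%N.
  by apply/eqP => e; move: hC0; case/set0Pn => x; subst n; case: x.
apply: (main_succ e0 e1 hC0 hCT ha hb fa fb).
rewrite /q (negbTE n0) -/e2.
set x := e2 / 2.
have x0 : 0 <= x by rewrite /x divr_ge0 // ltW.
have x1 : x <= 1 by rewrite /x; lra.
have h7 : 7 <= r%:R * x.
  have : 14 < r%:R * e2 by rewrite -ltr_pdivrMr.
  rewrite /x; lra.
have p8 := pow_small x0 x1 h7.
have y0 : 0 <= (1 - x) ^+ r by rewrite exprn_ge0 // subr_ge0.
have hp : (1 - x) ^+ (r * (n + 6)) <= (8^-1) ^+ (n + 6).
  by rewrite exprM lerXn2r // nnegrE // invr_ge0.
have h2 : ((2 ^ n)%N%:R : R) ^+ 2 * (8^-1) ^+ (n + 6) <= (8^-1) ^+ 6.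
  rewrite natrX -exprM mulnC exprM exprD mulrA -exprMn.
  rewrite -[X in _ <= X]mul1r ler_wpM2r ?exprn_ge0 ?invr_ge0 //.
  by rewrite exprn_ile1 //; lra.
have h3 : ((2 ^ n)%N%:R : R) ^+ 2 * (1 - x) ^+ (r * (n + 6)) <= (8^-1) ^+ 6.
  by apply: le_trans h2; rewrite ler_wpM2l ?exprn_ge0 ?ler0n.
have h4 : (8^-1 : R) ^+ 6 = 8^-1 * (8^-1 * (8^-1 * (8^-1 * (8^-1 * 8^-1)))).
  by rewrite !exprS expr0 mulr1.
rewrite h4 in h3; lra.
Qed.
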